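(* Let $x\in[0,1)$ be a $b$-imal number of depth $l$, and let $X$ be the string of length $l$ with $n(X)/b^l=x$. Let $j$ be the number of occurrences of $d$ in $X$. Let $l'\ge l$, and set $j'=j$ if $d>0$ and $j'=j+l'-l$ if $d=0$. Let $U$ be any subset of the open interval $(x,x+b^{-l'})$ and let $k\in\mathbb N$. Then: if $k<j'$, $\mu_k(U)=0$; if $k\ge j'$, $\mu_k(U)=b^{-l'}\mu_{k-j'}\big(b^{l'}U-b^{l'}x\big)$, where $b^{l'}U-b^{l'}x=\{b^{l'}(y-x):y\in U\}$.
   Context: Fix $b\ge2$ and $d\in\{0,\dots,b-1\}$; $\mathbb N=\{0,1,2,\dots\}$. A $b$-imal number is an element of $\bigcup_{l\ge0}b^{-l}\mathbb Z$; its depth is the smallest $l\ge0$ with $x\in b^{-l}\mathbb Z$. A string is a finite sequence $X=(d_l,\dots,d_1)$ of digits in $\{0,\dots,b-1\}$ (leading zeros allowed), of length $|X|=l\ge0$; its value is $n(X)=\sum_{i=1}^{l}d_ib^{i-1}$ ($0$ for the empty string). For $k\ge0$, $\mu_k=\sum_{X}b^{-|X|}\delta_{n(X)/b^{|X|}}$, the sum over all strings $X$ containing $d$ exactly $k$ times (masses at the same point add); it is a measure on $[0,1)$ of total mass $b$, defined on all subsets. *)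

(* Defs.v *)
From HB Require Import structures.
From mathcomp Require Import all_boot all_order all_algebra.
From mathcomp Require Import all_classical all_reals all_analysis.
Set Implicit Arguments. Unset Strict Implicit. Unset Printing Implicit Defensive.
Import Order.TTheory GRing.Theory Num.Theory.
Local Open Scope ring_scope.
Local Open Scope classical_set_scope.

(* A string of length l over digits {0..b-1}: X i is the digit d_{i+1}
   (the coefficient of b^i), i.e. X = (d_l, ..., d_1) with X i = d_{i+1}. *)
Definition bstring (b l : nat) := {ffun 'I_l -> 'I_b}.

Definition bvalue (b l : nat) (X : bstring b l) : nat :=
  (\sum_(i < l) (X i : nat) * b ^ i)%N.

Definition docc (b l : nat) (d : 'I_b) (X : bstring b l) : nat :=
  #|[set i | X i == d]|.

Definition bpoint (R : realType) (b l : nat) (X : bstring b l) : R :=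
  (bvalue X)%:R / (b%:R ^+ l).

(* mu_k(U) = sum over all strings X with exactly k occurrences of d and
   n(X)/b^|X| in U of b^(-|X|); grouped by length, as a series of
   nonnegative extended reals. *)
Definition mu (R : realType) (b : nat) (d : 'I_b) (k : nat) (U : set R) : \bar R :=
  (\sum_(0 <= l <oo)
     ((\sum_(X : bstring b l | (docc d X == k) && (bpoint R X \in U))
        (b%:R ^- l : R))%R)%:E)%E.

Definition in_bgrid (R : realType) (b l : nat) (x : R) : Prop :=
  exists z : int, x = z%:~R / (b%:R ^+ l).
Definition bdepth (R : realType) (b l : nat) (x : R) : Prop :=
  in_bgrid b l x /\ (forall l0 : nat, (l0 < l)%N -> ~ in_bgrid b l0 x).

(* Main.v *)
Require Import Defs.
From HB Require Import structures.
From mathcomp Require Import all_boot all_order all_algebra.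
From mathcomp Require Import all_classical all_reals all_analysis.
From mathcomp Require Import zify ring lra.
Import Order.TTheory GRing.Theory Num.Theory.
Set Implicit Arguments. Unset Strict Implicit. Unset Printing Implicit Defensive.
Set Implicit Arguments. Unset Strict Implicit. Unset Printing Implicit Defensive.
Section Comb.
Variable b : nat.

Definition btail l (Y : bstring b l.+1) : bstring b l := [ffun i => Y (lift ord0 i)].

Lemma bvalue_recl l (Y : bstring b l.+1) :
  bvalue Y = (Y ord0 + b * bvalue (btail Y))%N.
Proof.
rewrite /bvalue big_ord_recl /= expn0 muln1; congr (_ + _)%N.
rewrite big_distrr /=; apply: eq_bigr => i _; rewrite ffunE /= expnS; lia.
Qed.

Lemma bvalue_lt l (Y : bstring b l) : (bvalue Y < b ^ l)%N.
Proof.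
elim: l Y => [|l IH] Y; first by rewrite /bvalue big_ord0.
rewrite bvalue_recl expnS.
have h1 := IH (btail Y). have h2 : (Y ord0 < b)%N := ltn_ord _.
have : (b * (bvalue (btail Y)).+1 <= b * b ^ l)%N by rewrite leq_mul2l h1 orbT.
lia.
Qed.

Lemma bvalue_inj l (Y W : bstring b l) : bvalue Y = bvalue W -> Y = W.
Proof.
elim: l Y W => [|l IH] Y W; first by move=> _; apply/ffunP => -[].
rewrite !bvalue_recl => E.
have b0 : (0 < b)%N by case: (Y ord0) => i /=; lia.
have h0 : Y ord0 = W ord0.
  apply: val_inj => /=.
  have := congr1 (modn^~ b) E.
  by rewrite ![(_ + b * _)%N]addnC ![(b * _)%N]mulnC !modnMDl !modn_small.
move: E; rewrite h0 => /addnI /eqP; rewrite eqn_mul2l => /orP[/eqP b00|/eqP E];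
  first by rewrite b00 in b0.
have ht := IH _ _ E.
apply/ffunP => i; case: (unliftP ord0 i) => [j ->|->] //.
by have := congr1 (fun f : bstring b l => f j) ht; rewrite !ffunE.
Qed.

Lemma docc_sum l (d : 'I_b) (Y : bstring b l) :
  docc d Y = (\sum_(i < l) (Y i == d))%N.
Proof.
rewrite /docc -sum1_card big_mkcond /=; apply: eq_bigr => i _.
by case: ifPn => [|/negP]; rewrite in_setE /=; case: (Y i == d).
Qed.

Definition blow n m (Y : bstring b (n + m)) : bstring b n := [ffun i => Y (lshift m i)].
Definition bhigh n m (Y : bstring b (n + m)) : bstring b m := [ffun i => Y (rshift n i)].
Definition bcat n m (Z : bstring b n) (W : bstring b m) : bstring b (n + m) :=
  [ffun i => match fintype.split i with inl a => Z a | inr c => W c end].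

Lemma blow_cat n m Z W : @blow n m (bcat Z W) = Z.
Proof. by apply/ffunP => i; rewrite !ffunE -[lshift m i]/(unsplit (inl i)) unsplitK. Qed.
Lemma bhigh_cat n m Z W : @bhigh n m (bcat Z W) = W.
Proof. by apply/ffunP => i; rewrite !ffunE -[rshift n i]/(unsplit (inr i)) unsplitK. Qed.
Lemma bcatK n m (Y : bstring b (n + m)) : bcat (@blow n m Y) (@bhigh n m Y) = Y.
Proof.
apply/ffunP => i; rewrite !ffunE; rewrite -[in RHS](@splitK n m i).
by case: (fintype.split i) => a; rewrite ffunE.
Qed.

Lemma bvalue_split n m (Y : bstring b (n + m)) :
  bvalue Y = (bvalue (@blow n m Y) + b ^ n * bvalue (@bhigh n m Y))%N.
Proof.
rewrite /bvalue big_split_ord /=; congr (_ + _)%N.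
  by apply: eq_bigr => i _; rewrite ffunE.
rewrite big_distrr /=; apply: eq_bigr => i _; rewrite ffunE /= expnD; lia.
Qed.

Lemma docc_split n m (d : 'I_b) (Y : bstring b (n + m)) :
  docc d Y = (docc d (@blow n m Y) + docc d (@bhigh n m Y))%N.
Proof.
rewrite !docc_sum big_split_ord /=; congr (_ + _)%N;
  by apply: eq_bigr => i _; rewrite ffunE.
Qed.

Lemma bvalue_zero p (z : 'I_b) : nat_of_ord z = 0%N ->
  bvalue ([ffun=> z] : bstring b p) = 0%N.
Proof. by move=> z0; rewrite /bvalue big1 // => i _; rewrite ffunE z0. Qed.

Lemma docc_zero p (z d : 'I_b) : nat_of_ord z = 0%N ->
  docc d ([ffun=> z] : bstring b p) = if (0 < (d : nat))%N then 0%N else p.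
Proof.
move=> z0; rewrite docc_sum (eq_bigr (fun=> nat_of_bool (z == d))) => [|i _]; last by rewrite ffunE.
rewrite sum_nat_const card_ord.
have -> : (z == d) = ~~ (0 < (d : nat))%N.
  by apply/eqP/idP => [<-|]; [rewrite z0| move=> h; apply: val_inj => /=; lia].
by case: (0 < (d : nat))%N => /=; rewrite ?muln0 ?muln1.
Qed.

End Comb.

Local Open Scope ring_scope.
Section Real.
Variable R : realType.

Lemma sum_constP (T : finType) (P : pred T) (c : R) :
  \sum_(X | P X) c = c *+ #|P|.
Proof. by rewrite -sumr_const. Qed.

Lemma ltr_divc (c : R) (M N : nat) : 0 < c -> (M%:R / c < N%:R / c) = (M < N)%N.
Proof. by move=> c0; rewrite ltr_pM2r ?invr_gt0 // ltr_nat. Qed.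

Lemma pt_common (b m e N : nat) : (0 < b)%N ->
  (N%:R / (b%:R ^+ m) : R) = (N * b ^ e)%:R / b%:R ^+ (m + e).
Proof.
move=> b0; have bR0 : (b%:R : R) != 0 by rewrite pnatr_eq0 -lt0n.
rewrite natrM natrX exprD; field.
by rewrite !expf_neq0.
Qed.

End Real.

Unset Implicit Arguments.
Local Open Scope classical_set_scope.

Theorem mainTheorem12 (R : realType) (b : nat) (d : 'I_b) (x : R) (l : nat)
    (X : bstring b l) (l' : nat) (U : set R) (k : nat) :
  (2 <= b)%N ->
  0 <= x -> x < 1 ->
  bdepth b l x ->
  bpoint R X = x ->
  (l <= l')%N ->
  U `<=` `]x, x + (b%:R ^- l')[ ->
  let j := docc d X in
  let j' := if (0 < (d : nat))%N then j else (j + (l' - l))%N in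
  ((k < j')%N -> mu d k U = 0%E) /\
  ((j' <= k)%N ->
     mu d k U =
       ((b%:R ^- l' : R)%:E *
          mu d (k - j')%N [set ((b%:R ^+ l' : R) * (y - x))%R | y in U])%E).
Proof.
move=> hb _ _ _ hX hll'.
have b0 : (0 < b)%N by lia.
have bR0 : (b%:R : R) != 0 by rewrite pnatr_eq0 -lt0n.
have bRp : (0 : R) < b%:R by rewrite ltr0n.
have [p ->] : exists p, l' = (p + l)%N by exists (l' - l)%N; rewrite subnK.
rewrite addnK => hU.
pose z : 'I_b := Ordinal b0.
pose Xp : bstring b (p + l) := bcat ([ffun=> z] : bstring b p) X.
have hXpv : bvalue Xp = (b ^ p * bvalue X)%N.
  by rewrite /Xp bvalue_split blow_cat bhigh_cat bvalue_zero.
move=> j j'.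
have hXpd : docc d Xp = j'.
  rewrite /Xp docc_split blow_cat bhigh_cat docc_zero // /j' /j.
  by case: ifP => _; rewrite ?add0n // addnC.
move: hU Xp hXpv hXpd; set L := (p + l)%N => hU Xp hXpv hXpd.
have hx : x = (bvalue Xp)%:R / b%:R ^+ L.
  by rewrite -hX /bpoint hXpv /L natrM natrX exprD; field; rewrite !expf_neq0.
have hx1 : x + b%:R ^- L = (bvalue Xp + 1)%N%:R / b%:R ^+ L.
  by rewrite hx natrD mulrDl mul1r.
have inI m (Y : bstring b m) : bpoint R Y \in U -> x < bpoint R Y < x + b%:R ^- L.
  by move=> /[!in_setE] /hU; rewrite /= in_itv /=.
have gap m (Y : bstring b m) : (m <= L)%N -> ~ (x < bpoint R Y < x + b%:R ^- L).
  move=> hm; rewrite hx1 hx /bpoint (@pt_common R b m (L - m) (bvalue Y)) // subnKC //.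
  by rewrite !ltr_divc ?exprn_gt0 //; lia.
have win n (Y : bstring b (n + L)) : x < bpoint R Y < x + b%:R ^- L -> bhigh Y = Xp.
  rewrite hx1 hx /bpoint (@pt_common R b L n (bvalue Xp)) // (@pt_common R b L n (bvalue Xp + 1)) // [(L + n)%N]addnC.
  rewrite !ltr_divc ?exprn_gt0 // bvalue_split => hh.
  apply: bvalue_inj.
  have := bvalue_lt (blow Y).
  move: hh; set lo := bvalue _; set hi := bvalue (bhigh Y); set q := (b ^ n)%N.
  nia.
have ident n (Y : bstring b (n + L)) : bhigh Y = Xp ->
    b%:R ^+ L * (bpoint R Y - x) = bpoint R (blow Y).
  move=> hY; rewrite /bpoint bvalue_split hY hx natrD natrM natrX exprD.
  by field; rewrite !expf_neq0.
pose V := [set ((b%:R ^+ L : R) * (y - x))%R | y in U].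
pose F m := ((\sum_(Y : bstring b m | (docc d Y == k) && (bpoint R Y \in U))
        (b%:R ^- m : R))%R)%:E.
have F0 m : (0 <= F m)%E.
  by rewrite lee_fin sumr_ge0 // => ? _; rewrite invr_ge0 exprn_ge0 // ler0n.
have Fsmall m : (m < L)%N -> F m = 0%E.
  move=> hm; rewrite /F big1 // => Y /andP[_ /inI hY].
  by exfalso; apply: (gap m Y (ltnW hm)).
have muE : mu d k U = (\sum_(i <oo) F (i + L)%N)%E.
  rewrite /mu (nneseries_split 0 L); last by move=> m _; exact: F0.
  rewrite add0n big_nat_cond big1 ?add0e; last first.
    by move=> m /andP[/andP[_ hm] _]; exact: Fsmall.
  by rewrite nneseries_addn.
have hstr n (Y : bstring b (n + L)) : bpoint R Y \in U ->
    bhigh Y = Xp /\ docc d Y = (docc d (blow Y) + j')%N.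
  move=> hY; have hh := win _ _ (inI _ _ hY).
  by split => //; rewrite docc_split hh hXpd.
split => hk.
  rewrite muE; apply: eseries0 => i _ _.
  rewrite /F big1 // => Y /andP[/eqP hk' hY].
  have [_ hd] := hstr _ _ hY.
  by move: hk hk'; rewrite hd; lia.
rewrite muE /mu -nneseriesZl; last first.
  by move=> i _; rewrite lee_fin sumr_ge0 // => ? _; rewrite invr_ge0 exprn_ge0 // ler0n.
apply/congr_lim/funext => N; apply: eq_bigr => n _.
rewrite /F -EFinM; congr (_%:E).
rewrite !sum_constP exprD invfM mulrnAr; congr (_ *+ _); first by rewrite mulrC.
have injf : injective (fun Z : bstring b n => bcat Z Xp).
  by move=> Z1 Z2 /(congr1 (@blow b n L)); rewrite !blow_cat.
rewrite -[in RHS](fintype.card_image injf).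
apply: eq_card => Y; apply/idP/fintype.imageP.
- move=> /andP[/eqP hk' hY]; have [hh hd] := hstr _ _ hY.
  exists (blow Y); last by rewrite -{1}(bcatK Y) hh.
  apply/andP; split; first by apply/eqP; move: hk'; rewrite hd; lia.
  rewrite in_setE; exists (bpoint R Y); first by move: hY; rewrite in_setE.
  exact: ident.
- case=> Z /andP[/eqP hz hV] ->.
  apply/andP; split.
    by apply/eqP; rewrite docc_split blow_cat bhigh_cat hXpd hz; lia.
  move: hV; rewrite in_setE => -[y hy hyE].
  have := ident _ (bcat Z Xp) (bhigh_cat _ _).
  rewrite blow_cat -hyE => /mulfI => /(_ (expf_neq0 _ bR0)) /addIr ->.
  by rewrite in_setE.
Qed.
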